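(* Let $n\ge1$ and let $A_1,\ldots,A_n$ be operators on $\mathbb{C}^{2^n}$ such that $A_x^\dagger=A_x$ and $A_xA_y+A_yA_x=2\delta_{xy}\mathbb{1}$ for all $x,y$. Consider the dichotomic steering functional $F^{dicho}=\{A_x: x=1,\ldots,n\}$, acting on an $(n,2,2^n)$-assemblage $\sigma$ by $\langle F^{dicho},\sigma\rangle=\mathrm{Tr}\big(\sum_{x=1}^n A_x(\sigma_x^1-\sigma_x^2)\big)$. Then $$V(F^{dicho})=\frac{\sup\{|\langle F^{dicho},\sigma\rangle|:\sigma\in\mathcal{Q}\}}{\sup\{|\langle F^{dicho},\sigma\rangle|:\sigma\in\mathcal{L}\}}\ \ge\ \sqrt{\tfrac{n}{2}}.$$
   Context: Here $d=2^n$. An $(n,2,d)$-assemblage is a family $\sigma=\{\sigma_x^a: x=1,\ldots,n,\ a=1,2\}$ of positive semidefinite operators on $\mathbb{C}^d$ such that $\sigma_x^1+\sigma_x^2$ does not depend on $x$ and has trace $1$; $\mathcal{Q}$ is the set of all such assemblages. An assemblage has a local hidden state (LHS) model if there exist a finite index set $\Lambda$, weights $q_\lambda\ge0$ with $\sum_\lambda q_\lambda=1$, density matrices $\sigma_\lambda$ on $\mathbb{C}^d$, and probability distributions $\{p_\lambda(a|x)\}_{a=1,2}$ for each $x,\lambda$, such that $\sigma_x^a=\sum_\lambda q_\lambda p_\lambda(a|x)\sigma_\lambda$ for all $x,a$; $\mathcal{L}$ is the set of such assemblages. *)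

(* Defs.v *)
From HB Require Import structures.
From mathcomp Require Import all_boot all_order all_algebra.
From mathcomp Require Import complex.
From mathcomp Require Import boolp classical_sets reals.
Set Implicit Arguments. Unset Strict Implicit. Unset Printing Implicit Defensive.
Import Order.TTheory GRing.Theory Num.Theory.
Local Open Scope ring_scope.

Section Steering.
Variable R : realType.
Local Notation C := R[i].

Definition adjmx (d : nat) (A : 'M[C]_d) : 'M[C]_d :=
  map_mx (fun z : C => z^*) A^T.

Definition herm_mx (d : nat) (A : 'M[C]_d) : Prop := adjmx A = A.

(* positive semidefinite: Hermitian and v^dagger A v >= 0 for all v
   (for complex numbers, 0 <= z means z is real and nonnegative) *)
Definition psd (d : nat) (A : 'M[C]_d) : Prop :=
  herm_mx A /\
  forall v : 'cV[C]_d, 0 <= ((map_mx (fun z : C => z^*) v^T) *m A *m v) 0 0.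

Definition density (d : nat) (A : 'M[C]_d) : Prop := psd A /\ \tr A = 1.

(* An (n,2,d)-assemblage sigma x a, with x : 'I_n (x = 1..n) and
   a : 'I_2 (index 0 is outcome a=1, index 1 is outcome a=2). *)
Definition assemblage (n d : nat) (sigma : 'I_n -> 'I_2 -> 'M[C]_d) : Prop :=
  (forall x a, psd (sigma x a)) /\
  exists rho : 'M[C]_d, (forall x, sigma x 0 + sigma x 1 = rho) /\ \tr rho = 1.

Definition has_LHS (n d : nat) (sigma : 'I_n -> 'I_2 -> 'M[C]_d) : Prop :=
  exists (m : nat) (q : 'I_m -> R) (rho : 'I_m -> 'M[C]_d)
         (p : 'I_m -> 'I_n -> 'I_2 -> R),
    (forall l, 0 <= q l) /\ \sum_(l < m) q l = 1 /\
    (forall l, density (rho l)) /\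
    (forall l x a, 0 <= p l x a) /\ (forall l x, \sum_(a < 2) p l x a = 1) /\
    (forall x a, sigma x a = \sum_(l < m) ((q l * p l x a)%:C)%C *: rho l).

Definition LHS_assemblage (n d : nat) (sigma : 'I_n -> 'I_2 -> 'M[C]_d) : Prop :=
  assemblage sigma /\ has_LHS sigma.

Definition dicho_pairing (n d : nat) (A : 'I_n -> 'M[C]_d)
  (sigma : 'I_n -> 'I_2 -> 'M[C]_d) : C :=
  \tr (\sum_(x < n) A x *m (sigma x 0 - sigma x 1)).

Definition quantum_value (n d : nat) (A : 'I_n -> 'M[C]_d) : R :=
  sup [set r : R | exists sigma, assemblage sigma /\ r = @complex.Re R `|dicho_pairing A sigma|].

Definition local_value (n d : nat) (A : 'I_n -> 'M[C]_d) : R :=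
  sup [set r : R | exists sigma, LHS_assemblage sigma /\ r = @complex.Re R `|dicho_pairing A sigma|].

Definition violation (n d : nat) (A : 'I_n -> 'M[C]_d) : R :=
  quantum_value A / local_value A.

End Steering.

(* Main.v *)
Require Import Defs.
From HB Require Import structures.
From mathcomp Require Import all_boot all_order all_algebra.
From mathcomp Require Import lra.
From mathcomp Require Import complex.
From mathcomp Require Import boolp classical_sets reals.
Import Order.TTheory GRing.Theory Num.Theory.
Local Open Scope ring_scope.
Set Implicit Arguments. Unset Strict Implicit. Unset Printing Implicit Defensive.

Section Aux.
Variable R : realType.
Local Notation C := R[i].

Lemma trZ d (a : C) (M : 'M[C]_d) : \tr (a *: M) = a * \tr M.
Proof. exact: mxtraceZ. Qed.

Lemma adjE d (A : 'M[C]_d) i j : adjmx A i j = (A j i)^*.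
Proof. by rewrite /adjmx !mxE. Qed.

Lemma tr_adjMM d (M S : 'M[C]_d) : psd S -> 0 <= \tr (adjmx M *m M *m S).
Proof.
move=> [_ HS].
rewrite -mulmxA mxtrace_mulC /mxtrace.
apply: sumr_ge0 => i _.
have := HS (map_mx (fun z : C => z^*) (row i M))^T.
congr (_ <= _).
rewrite !mxE; apply: eq_bigr => j _; rewrite adjE !mxE; congr (_ * _).
by apply: eq_bigr => k _; rewrite !mxE ?conjCK.
Qed.

Lemma adj1 d : adjmx (1%:M : 'M[C]_d) = 1%:M.
Proof. by apply/matrixP=> i j; rewrite adjE !mxE eq_sym; case: (i == j); rewrite ?conjC1 ?conjC0. Qed.

Lemma tr_psd_ge0 d (S : 'M[C]_d) : psd S -> 0 <= \tr S.
Proof. by move=> /(tr_adjMM 1%:M); rewrite adj1 !mul1mx. Qed.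


Lemma adjB d (X Y : 'M[C]_d) : adjmx (X - Y) = adjmx X - adjmx Y.
Proof. by apply/matrixP=> i j; rewrite /adjmx !mxE rmorphB. Qed.

Lemma adj_scalar d (t : C) : adjmx (t%:M : 'M[C]_d) = (t^*)%:M.
Proof. by apply/matrixP=> i j; rewrite adjE !mxE eq_sym; case: (i == j); rewrite ?mulr1n ?mulr0n ?conjC0. Qed.

Lemma zmod_aux (V : zmodType) (u v w : V) : v - u - (u - w) = v + w - (u + u).
Proof. by rewrite opprB opprD addrA addrAC -!addrA [w + _]addrC !addrA. Qed.

Lemma key d (B S : 'M[C]_d) (c t : C) : herm_mx B -> t^* = t -> B *m B = c%:M -> psd S ->
  2 * t * \tr (B *m S) <= (c + t ^+ 2) * \tr S.
Proof.
move=> hB ht hBB hS.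
have := tr_adjMM (B - t%:M) hS.
rewrite adjB adj_scalar ht hB.
have -> : (B - t%:M) *m (B - t%:M) *m S = (c + t ^+ 2) *: S - (2 * t) *: (B *m S).
  rewrite mulmxBl !mulmxBr hBB mul_mx_scalar mul_scalar_mx.
  rewrite !mulmxBl -!scalemxAl !mul_scalar_mx -scalemxAl mul_scalar_mx scalerA.
  rewrite scalerDl (_ : 2 * t = t + t); last by rewrite mulrDl mul1r.
  by rewrite scalerDl expr2 zmod_aux.
by rewrite raddfB /= !mxtraceZ subr_ge0.
Qed.


Lemma bound_up d (B S : 'M[C]_d) (c k : C) : herm_mx B -> B *m B = c%:M -> psd S ->
  c <= k -> 0 < k -> \tr (B *m S) <= sqrtC k * \tr S.
Proof.
move=> hB hBB hS hck hk.
set t := sqrtC k.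
have t0 : 0 < t by rewrite sqrtC_gt0.
have tr : t^* = t by apply: conj_Creal; rewrite ger0_real // ltW.
have := key hB tr hBB hS.
have hS0 := tr_psd_ge0 hS.
have h2 : (c + t ^+ 2) * \tr S <= (2 * t) * (t * \tr S).
  rewrite sqrtCK mulrA -(mulrA 2) -expr2 sqrtCK.
  by apply: ler_wpM2r => //; rewrite -[2]/(1 + 1) mulrDl mul1r lerD2r.
move=> h1; have := le_trans h1 h2.
have p2 : 0 < 2 * t by rewrite mulr_gt0 // ltr0n.
by rewrite ler_pM2l.
Qed.

Lemma herm_opp d (B : 'M[C]_d) : herm_mx B -> herm_mx (- B).
Proof. by rewrite /herm_mx => hB; apply/matrixP=> i j; rewrite adjE !mxE rmorphN; congr (- _); rewrite -[RHS](congr1 (fun M : 'M[C]_d => M i j) hB) adjE. Qed.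

Lemma bound d (B S : 'M[C]_d) (c k : C) : herm_mx B -> B *m B = c%:M -> psd S ->
  c <= k -> 0 < k -> - (sqrtC k * \tr S) <= \tr (B *m S) <= sqrtC k * \tr S.
Proof.
move=> hB hBB hS hck hk; rewrite (bound_up hB hBB) // andbT lerNl.
have := @bound_up d (- B) S c k (herm_opp hB).
by rewrite mulNmx mulmxN opprK mulNmx raddfN => ->.
Qed.


Lemma adjM d (X Y : 'M[C]_d) : adjmx (X *m Y) = adjmx Y *m adjmx X.
Proof.
apply/matrixP=> i j; rewrite adjE !mxE rmorph_sum; apply: eq_bigr => k _.
by rewrite !adjE rmorphM mulrC.
Qed.

Lemma adjK d (X : 'M[C]_d) : adjmx (adjmx X) = X.
Proof. by apply/matrixP=> i j; rewrite !adjE conjCK. Qed.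

Lemma psd_adjMM d (M : 'M[C]_d) : psd (adjmx M *m M).
Proof.
split; first by rewrite /herm_mx adjM adjK.
move=> v; rewrite !mulmxA -(mulmxA _ M v).
have -> : map_mx (fun z : C => z^*) v^T *m adjmx M = map_mx (fun z : C => z^*) (M *m v)^T.
  apply/matrixP=> i j; rewrite !mxE rmorph_sum; apply: eq_bigr => k _.
  by rewrite !mxE rmorphM mulrC.
rewrite mxE; apply: sumr_ge0 => j _; rewrite !mxE mulrC.
exact: mul_conjC_ge0.
Qed.

Lemma psd_scale d (X : 'M[C]_d) (r : C) : 0 <= r -> psd X -> psd (r *: X).
Proof.
move=> r0 [hX hv]; split; rewrite ?/herm_mx.
  apply/matrixP=> i j; have := congr1 (fun M : 'M[C]_d => M i j) hX.
  rewrite adjE => hXij; have hr : r^* = r by exact: conj_Creal (ger0_real r0).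
  by rewrite adjE !mxE -[r in RHS]hr -hXij -rmorphM.
move=> v; rewrite -scalemxAr -scalemxAl mxE; exact: mulr_ge0.
Qed.


Lemma adjD d (X Y : 'M[C]_d) : adjmx (X + Y) = adjmx X + adjmx Y.
Proof. by apply/matrixP=> i j; rewrite /adjmx !mxE rmorphD. Qed.

Lemma adjZ d (X : 'M[C]_d) a : adjmx (a *: X) = a^* *: adjmx X.
Proof. by apply/matrixP=> i j; rewrite /adjmx !mxE rmorphM. Qed.

Lemma half2 d (Y : 'M[C]_d) : (2^-1 : C) *: (Y + Y) = Y.
Proof. by rewrite scalerDr -scalerDl -{1 2}(mul1r (2^-1)) -splitr scale1r. Qed.

Definition proj d (s : C) (X : 'M[C]_d) : 'M[C]_d := (2^-1 : C) *: (1%:M + s *: X).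

Lemma sq_aux d (s : C) (X : 'M[C]_d) : X *m X = 1%:M -> s * s = 1 ->
  (1%:M + s *: X) *m (1%:M + s *: X) = 2 *: (1%:M + s *: X).
Proof.
move=> hXX hs.
rewrite mulmxDl !mulmxDr !mul1mx mulmx1 -scalemxAl -scalemxAr scalerA hXX hs scale1r.
by rewrite scaler_nat mulr2n [s *: X + _]addrC addrA.
Qed.

Lemma proj_herm d (s : C) (X : 'M[C]_d) : herm_mx X -> s^* = s -> herm_mx (proj s X).
Proof.
move=> hX hs; rewrite /herm_mx /proj adjZ adjD adjZ adj_scalar hX hs conjC1.
by rewrite (conj_Creal (ger0_real _)) // invr_ge0 ler0n.
Qed.

Lemma proj_idem d (s : C) (X : 'M[C]_d) : X *m X = 1%:M -> s * s = 1 ->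
  proj s X *m proj s X = proj s X.
Proof.
move=> hXX hs; rewrite /proj -scalemxAl -scalemxAr sq_aux // !scalerA.
by rewrite -mulrA mulVf ?mulr1 // pnatr_eq0.
Qed.

Lemma proj_psd d (s : C) (X : 'M[C]_d) : herm_mx X -> s^* = s -> X *m X = 1%:M -> s * s = 1 ->
  psd (proj s X).
Proof.
move=> hX hsc hXX hs.
have := psd_adjMM (proj s X); by rewrite (proj_herm hX hsc) proj_idem.
Qed.

Lemma proj_sum d (X : 'M[C]_d) : proj 1 X + proj (-1) X = 1%:M.
Proof.
by rewrite /proj -scalerDr scaleN1r addrACA scale1r subrr addr0 half2.
Qed.

Lemma proj_diff d (X : 'M[C]_d) : proj 1 X - proj (-1) X = X.
Proof.
rewrite /proj -scalerBr scaleN1r scale1r opprD opprK addrACA subrr add0r.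
by rewrite half2.
Qed.

Lemma proj_mul d (s : C) (X : 'M[C]_d) : X *m X = 1%:M -> s * s = 1 ->
  X *m proj s X = s *: proj s X.
Proof.
move=> hXX hs; rewrite /proj -scalemxAr mulmxDr mulmx1 -scalemxAr hXX.
rewrite [RHS]scalerA mulrC -scalerA; congr (_ *: _).
by rewrite scalerDr scalerA hs scale1r addrC.
Qed.


Lemma Creal_R (r : R) : (r%:C%C : C) \is Num.real.
Proof.
have := num_real r; rewrite !realE -(rmorph0 (real_complex R)) !lecR.
by [].
Qed.

Lemma conj_R (r : R) : ((r%:C%C : C)^*) = r%:C%C.
Proof. exact: conj_Creal (Creal_R r). Qed.

Lemma Re_norm_le (z b : C) : b \is Num.real -> - b <= z <= b -> complex.Re `|z| <= complex.Re b.
Proof.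
move=> br /andP[h1 h2].
have zr : z \is Num.real.
  have bn : - b \is Num.real by rewrite rpredN.
  have := rpredD (lerB_real h1) bn.
  by rewrite subrK.
have : `|z| <= b by rewrite real_ler_norml // h1 h2.
by rewrite lecE => /andP[].
Qed.

Lemma sq_one d (X : 'M[C]_d) : X *m X + X *m X = 2%:M -> X *m X = 1%:M.
Proof.
move=> h; rewrite -(half2 (X *m X)) h scale_scalar_mx mulVf //.
by rewrite pnatr_eq0.
Qed.


Section Quantum.
Variables (n d : nat) (A : 'I_n -> 'M[C]_d).
Hypothesis hA : forall x, herm_mx (A x).
Hypothesis hAA : forall x, A x *m A x = 1%:M.
Hypothesis hd : (0 < d)%N.

Definition sigq (x : 'I_n) (a : 'I_2) : 'M[C]_d :=
  ((d%:R)^-1 : C) *: proj (if a == 0 then 1 else -1) (A x).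

Lemma dC_neq0 : (d%:R : C) != 0.
Proof. by rewrite pnatr_eq0 -lt0n. Qed.

Lemma sigq_assemblage : assemblage sigq.
Proof.
split.
  move=> x a; apply: psd_scale; first by rewrite invr_ge0 ler0n.
  apply: proj_psd => //; case: (a == 0); rewrite ?conjC1 ?rmorphN1 ?mulr1 ?mulrNN ?mulr1 //.
exists ((d%:R)^-1 *: 1%:M); split.
  by move=> x; rewrite /sigq -scalerDr /= proj_sum.
by rewrite mxtraceZ mxtrace1 mulVf // dC_neq0.
Qed.

Lemma sigq_pair : dicho_pairing A sigq = n%:R.
Proof.
rewrite /dicho_pairing raddf_sum /=.
rewrite (eq_bigr (fun _ => 1)); first by rewrite sumr_const card_ord.
move=> x _; rewrite /sigq -scalerBr /= proj_diff -scalemxAr hAA mxtraceZ mxtrace1.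
by rewrite mulVf // dC_neq0.
Qed.

Lemma q_bound sigma : assemblage sigma ->
  - (n%:R : C) <= dicho_pairing A sigma <= n%:R.
Proof.
move=> [hpsd [rho [hsum htr]]].
have key1 x : - 1 <= \tr (A x *m (sigma x 0 - sigma x 1)) <= 1.
  have hone : \tr (sigma x 0) + \tr (sigma x 1) = 1 by rewrite -raddfD /= hsum.
  have /andP[a1 a2] := bound (hA x) (hAA x) (hpsd x 0) (lexx 1) ltr01.
  have /andP[b1 b2] := bound (hA x) (hAA x) (hpsd x 1) (lexx 1) ltr01.
  rewrite sqrtC1 !mul1r in a1 a2 b1 b2.
  rewrite mulmxBr raddfB /= -hone opprD; apply/andP; split.
    by apply: lerD => //; rewrite lerN2.
  by apply: lerD => //; rewrite lerNl.
have -> : (n%:R : C) = \sum_(x < n) 1 by rewrite sumr_const card_ord.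
rewrite /dicho_pairing (raddf_sum (@mxtrace C d)) -sumrN.
by apply/andP; split; apply: ler_sum => x _; case/andP: (key1 x).
Qed.

End Quantum.


Section Local.
Variables (n d : nat) (A : 'I_n -> 'M[C]_d).
Hypothesis hA : forall x, herm_mx (A x).
Hypothesis hAC : forall x y, A x *m A y + A y *m A x = (if x == y then 2 else 0)%:M.

Lemma B_sq (c : 'I_n -> C) :
  (\sum_x c x *: A x) *m (\sum_x c x *: A x) = (\sum_x c x * c x)%:M.
Proof.
set S := _ *m _.
have hS : S = \sum_x \sum_y (c x * c y) *: (A x *m A y).
  rewrite /S mulmx_suml; apply: eq_bigr => x _; rewrite mulmx_sumr.
  by apply: eq_bigr => y _; rewrite -scalemxAl -scalemxAr scalerA.
have hSS : S + S = \sum_x (c x * c x) *: 2%:M.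
  rewrite hS [X in X + _]exchange_big /= -big_split /=; apply: eq_bigr => x _.
  rewrite -big_split /=.
  rewrite (eq_bigr (fun y => (c x * c y) *: (if x == y then 2 else 0)%:M)); last first.
    by move=> y _; rewrite [c y * _]mulrC -scalerDr addrC hAC.
  rewrite (bigD1 x) //= eqxx big1 ?addr0 // => y hy.
  by rewrite eq_sym (negbTE hy) (raddf0 (@scalar_mx C d)) scaler0.
by rewrite -(half2 S) hSS -scaler_suml scale_scalar_mx scale_scalar_mx mulrCA mulVf ?mulr1 // pnatr_eq0.
Qed.


Lemma herm_comb (r : 'I_n -> R) : herm_mx (\sum_x (r x)%:C%C *: A x).
Proof.
rewrite /herm_mx; apply/matrixP=> i j; rewrite adjE !summxE rmorph_sum.
apply: eq_bigr => x _; rewrite !mxE.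
have := congr1 (fun M : 'M[C]_d => M i j) (hA x); rewrite adjE => <-.
by rewrite -[(r x)%:C%C in RHS]conj_R -rmorphM.
Qed.

Lemma sq_le1 (a b : R) : 0 <= a -> 0 <= b -> a + b = 1 -> (a - b) * (a - b) <= 1.
Proof. move=> ha hb hab; nra. Qed.

Lemma l_bound (hn : (0 < n)%N) sigma : LHS_assemblage sigma ->
  - sqrtC (n%:R : C) <= dicho_pairing A sigma <= sqrtC (n%:R : C).
Proof.
move=> [_ [m [q [rho [p [hq [hq1 [hrho [hp [hp1 hsig]]]]]]]]]].
pose c l x : C := (p l x 0 - p l x 1)%:C%C.
have hpair : dicho_pairing A sigma =
    \sum_l (q l)%:C%C * \tr ((\sum_x c l x *: A x) *m rho l).
  have e1 x : \tr (A x *m (sigma x 0 - sigma x 1)) =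
      \sum_l ((q l)%:C%C * c l x) * \tr (A x *m rho l).
    rewrite !hsig -sumrB mulmx_sumr (raddf_sum (@mxtrace C d)); apply: eq_bigr => l _.
    rewrite -scalerBl -scalemxAr.
    transitivity (((q l * p l x 0)%:C%C - (q l * p l x 1)%:C%C) * \tr (A x *m rho l)).
      exact: mxtraceZ.
    by rewrite -rmorphB -mulrBr rmorphM.
  have e2 l : \tr ((\sum_x c l x *: A x) *m rho l) = \sum_x c l x * \tr (A x *m rho l).
    rewrite mulmx_suml (raddf_sum (@mxtrace C d)); apply: eq_bigr => x _.
    rewrite -scalemxAl; exact: mxtraceZ.
  rewrite /dicho_pairing (raddf_sum (@mxtrace C d)) (eq_bigr _ (fun x _ => e1 x)).
  rewrite exchange_big /=; apply: eq_bigr => l _.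
  by rewrite e2 mulr_sumr; apply: eq_bigr => x _; rewrite mulrA.
set u := sqrtC (n%:R : C).
have hl l : - u <= \tr ((\sum_x c l x *: A x) *m rho l) <= u.
  have [hpsd htr] := hrho l.
  have := @bound d (\sum_x c l x *: A x) (rho l) (\sum_x c l x * c l x) (n%:R)
    (herm_comb (fun x => p l x 0 - p l x 1)) (B_sq (c l)) hpsd.
  rewrite htr mulr1 => -> //; last by rewrite ltr0n.
  have -> : (n%:R : C) = \sum_(x < n) 1 by rewrite sumr_const card_ord.
  apply: ler_sum => x _; rewrite /c -rmorphM -(rmorph1 (real_complex R)) lecR.
  apply: sq_le1; rewrite ?hp //.
  by rewrite -(hp1 l x) big_ord_recr big_ord1 /=; congr (_ + _); congr (p l x _); apply: val_inj.
have hq1C : \sum_l (q l)%:C%C = 1 :> C by rewrite -rmorph_sum hq1 rmorph1.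
have hqC l : 0 <= (q l)%:C%C :> C by rewrite -(rmorph0 (real_complex R)) lecR hq.
rewrite hpair; apply/andP; split.
  rewrite -[- u]mul1r -hq1C mulr_suml; apply: ler_sum => l _.
  by rewrite ler_wpM2l //; case/andP: (hl l).
rewrite -[u]mul1r -hq1C mulr_suml; apply: ler_sum => l _.
by rewrite ler_wpM2l //; case/andP: (hl l).
Qed.


Lemma hAA x : A x *m A x = 1%:M.
Proof. by apply: sq_one; rewrite hAC eqxx. Qed.

Lemma local_witness (x0 : 'I_n) (s : C) : (s = 1 \/ s = -1) ->
  0 < \tr (proj s (A x0)) ->
  exists sigma, LHS_assemblage sigma /\ dicho_pairing A sigma = s.
Proof.
move=> hs htrP.
have hsc : s^* = s by case: hs => ->; rewrite ?conjC1 ?rmorphN1.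
have hss : s * s = 1 by case: hs => ->; rewrite ?mulr1 ?mulrNN ?mulr1.
set P := proj s (A x0).
have hP : psd P by apply: proj_psd => //; apply: hAA.
pose r0 : 'M[C]_d := (\tr P)^-1 *: P.
have hr0 : density r0.
  split; first by apply: psd_scale => //; rewrite invr_ge0 ltW.
  rewrite /r0; transitivity ((\tr P)^-1 * \tr P); first exact: mxtraceZ.
  by rewrite mulVf // gt_eqF.
pose p (l : 'I_1) (x : 'I_n) (a : 'I_2) : R :=
  if x == x0 then (if a == 0 then 1 else 0) else 2^-1.
pose q (l : 'I_1) : R := 1.
pose rho (l : 'I_1) := r0.
pose sigma x a := \sum_(l < 1) ((q l * p l x a)%:C%C : C) *: rho l.
have hp l x a : 0 <= p l x a.
  by rewrite /p; case: (x == x0); case: (a == 0); rewrite ?invr_ge0 ?ler0n.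
have hp1 l x : \sum_(a < 2) p l x a = 1.
  rewrite big_ord_recr big_ord1 /p /=.
  case: (x == x0) => /=; first by rewrite addr0.
  by rewrite -{1 2}(mul1r (2^-1)) -splitr.
have hsig x a : sigma x a = ((p 0 x a)%:C%C : C) *: r0.
  by rewrite /sigma big_ord1 /q mul1r.
exists sigma; split.
  split.
    split.
      move=> x a; rewrite hsig; apply: psd_scale; last exact: hr0.1.
      by rewrite -(rmorph0 (real_complex R)) lecR.
    exists r0; split; last exact: hr0.2.
    move=> x; rewrite !hsig -scalerDl -rmorphD.
    have := hp1 0 x; rewrite big_ord_recr big_ord1 /= => h.
    have -> : p 0 x 0 + p 0 x 1 = 1.
      by rewrite -h; congr (_ + _); congr (p _ x _); apply: val_inj.
    by rewrite rmorph1 scale1r.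
  exists 1%N, q, rho, p; do ! split => //.
  by rewrite big_ord1.
rewrite /dicho_pairing (raddf_sum (@mxtrace C d)).
rewrite (bigD1 x0) //= big1 ?addr0; last first.
  move=> x hx; rewrite !hsig -scalerBl -rmorphB /p (negbTE hx) subrr rmorph0 scale0r.
  by rewrite mulmx0 raddf0.
rewrite !hsig -scalerBl -rmorphB /p eqxx /= subr0 rmorph1 scale1r /r0 -scalemxAr.
transitivity ((\tr P)^-1 * \tr (A x0 *m P)); first exact: mxtraceZ.
rewrite proj_mul //; last exact: hAA.
transitivity ((\tr P)^-1 * (s * \tr P)); first by congr (_ * _); exact: mxtraceZ.
by rewrite mulrCA mulVf ?mulr1 // gt_eqF.
Qed.

End Local.

End Aux.

Theorem corollary1 (R : realType) (n : nat) (hn : (1 <= n)%N)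
  (A : 'I_n -> 'M[R[i]]_(2 ^ n))
  (hA : forall x, herm_mx (A x))
  (hAC : forall x y, A x *m A y + A y *m A x = (if x == y then 2 else 0)%:M) :
  Num.sqrt (n%:R / 2 : R) <= violation A.
Proof.
have hd : (0 < 2 ^ n)%N by rewrite expn_gt0.
have hAA := hAA hAC.
have hnC : complex.Re (n%:R : R[i]) = n%:R.
  by rewrite -(rmorph_nat (real_complex R)).
have qub : ubound [set r : R | exists sigma, assemblage sigma /\ r = complex.Re `|dicho_pairing A sigma|]%classic n%:R.
  move=> r [sigma [hs ->]]; rewrite -hnC; apply: Re_norm_le; first exact: realn.
  exact: q_bound.
have qin : [set r : R | exists sigma, assemblage sigma /\ r = complex.Re `|dicho_pairing A sigma|]%classic n%:R.
  exists (sigq A); split; first exact: (sigq_assemblage hA hAA hd).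
  rewrite (sigq_pair hAA hd). have -> : `|(n%:R : R[i])| = n%:R by exact: normr_nat. by [].
have hq : n%:R <= quantum_value A.
  apply: sup_upper_bound => //; split; first by exists n%:R.
  by exists n%:R.
set w := sqrtC (n%:R : R[i]).
have w0 : 0 <= w by rewrite sqrtC_ge0 ler0n.
set u := complex.Re w.
have wu : u%:C%C = w by apply: RRe_real; exact: ger0_real.
have u0 : 0 <= u by move: w0; rewrite lecE => /andP[].
have uu : u * u = n%:R.
  have : (u * u)%:C%C = (n%:R : R[i]).
    have -> : (u * u)%:C%C = (u%:C%C * u%:C%C : R[i]) by exact: rmorphM.
    by rewrite wu -expr2 sqrtCK.
  by move/(congr1 (@complex.Re R)); rewrite hnC.
have lub : ubound [set r : R | exists sigma, LHS_assemblage sigma /\ r = complex.Re `|dicho_pairing A sigma|]%classic u.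
  move=> r [sigma [hs ->]]; apply: Re_norm_le; first exact: ger0_real.
  exact: l_bound.
pose x0 : 'I_n := Ordinal hn.
have lin : [set r : R | exists sigma, LHS_assemblage sigma /\ r = complex.Re `|dicho_pairing A sigma|]%classic 1.
  have htr : \tr (proj 1 (A x0)) + \tr (proj (-1) (A x0)) = (2 ^ n)%:R.
    by rewrite -raddfD /= proj_sum mxtrace1.
  have hP1 : 0 <= \tr (proj 1 (A x0)).
    by apply/tr_psd_ge0/proj_psd; rewrite ?conjC1 ?mulr1.
  have hP2 : 0 <= \tr (proj (-1) (A x0)).
    by apply/tr_psd_ge0/proj_psd; rewrite ?rmorphN1 ?mulrNN ?mulr1.
  have [s [hs hpos]] : exists s : R[i], (s = 1 \/ s = -1) /\ 0 < \tr (proj s (A x0)).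
    case: (eqVneq (\tr (proj 1 (A x0))) 0) => h0.
      exists (-1); split; first by right.
      have -> : \tr (proj (-1) (A x0)) = (2 ^ n)%:R by rewrite -htr h0 add0r.
      by rewrite ltr0n.
    by exists 1; split; [left | rewrite lt_def h0 hP1].
  have [sigma [hs' hpair]] := local_witness hA hAC hs hpos.
  exists sigma; split => //; rewrite hpair.
  by case: hs => ->; rewrite ?normrN normr1.
have hl1 : 1 <= local_value A.
  apply: sup_upper_bound => //; split; first by exists 1.
  by exists u.
have hlu : local_value A <= u by apply: ge_sup => //; exists 1.
rewrite /violation.
have lv0 : 0 < local_value A by apply: lt_le_trans hl1; exact: ltr01.
have hsq : Num.sqrt (n%:R / 2 : R) <= u.
  rewrite -(ger0_norm u0) -sqrtr_sqr expr2 uu.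
  apply: ler_wsqrtr; rewrite ler_pdivrMr ?ltr0n //.
  by rewrite ler_peMr ?ler0n // ler1n.
apply: (le_trans hsq); rewrite ler_pdivlMr //.
nra.
Qed.
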